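(* Let $\mathcal P$ be a finite-dimensional solvable Poisson $n$-Lie algebra over a field of characteristic $0$. Then $d(\operatorname{Nil}(\mathcal P))\subseteq\operatorname{Nil}(\mathcal P)$ for every derivation $d$ of $\mathcal P$.
   Context: A Poisson $n$-Lie algebra is a commutative associative algebra $(\mathcal P,\cdot)$ with an $n$-linear skew-symmetric bracket satisfying the fundamental identity $[x_1,\dots,x_{n-1},[y_1,\dots,y_n]]=\sum_{i=1}^n[y_1,\dots,[x_1,\dots,x_{n-1},y_i],\dots,y_n]$ and the Leibniz rule $[y\cdot z,x_2,\dots,x_n]=y\cdot[z,x_2,\dots,x_n]+z\cdot[y,x_2,\dots,x_n]$. A derivation of $\mathcal P$ is a linear map $d$ with $d(x\cdot y)=d(x)\cdot y+x\cdot d(y)$ and $d([x_1,\dots,x_n])=\sum_i[x_1,\dots,d(x_i),\dots,x_n]$. Products/brackets of subspaces are linear spans. An ideal $\mathcal I$ is nilpotent if $\mathcal I^s=0$ for some $s$, where $\mathcal I^1=\mathcal I$, $\mathcal I^{k+1}=[\mathcal I^k,\mathcal I,\mathcal P,\dots,\mathcal P]+\mathcal I^k\cdot\mathcal I$; $\operatorname{Nil}(\mathcal P)$ is the maximal nilpotent ideal. $\mathcal P$ is solvable if $\mathcal P^{(s)}=0$ for some $s$, with $\mathcal P^{(1)}=\mathcal P$, $\mathcal P^{(k+1)}=[\mathcal P^{(k)},\mathcal P^{(k)},\mathcal P,\dots,\mathcal P]+\mathcal P^{(k)}\cdot\mathcal P^{(k)}$. *)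

(* Defs.v *)
From HB Require Import structures.
From mathcomp Require Import all_boot all_order all_algebra all_fingroup.
Set Implicit Arguments. Unset Strict Implicit. Unset Printing Implicit Defensive.
Import GRing.Theory.
Local Open Scope ring_scope.

Section PoissonNLie.
Variables (F : fieldType) (V : vectType F) (n : nat).

Definition upd (x : 'I_n -> V) (i : 'I_n) (w : V) : 'I_n -> V :=
  fun k => if k == i then w else x k.
Definition upd_first (x : 'I_n -> V) (w : V) : 'I_n -> V :=
  fun k => if val k == 0%N then w else x k.
Definition upd_last (x : 'I_n -> V) (w : V) : 'I_n -> V :=
  fun k => if val k == n.-1 then w else x k.

Variables (mul : V -> V -> V) (br : ('I_n -> V) -> V).

Record poisson_nlie : Prop := {
  mul_linl : forall (a : F) u v w, mul (a *: u + v) w = a *: mul u w + mul v w;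
  mul_comm : forall u v, mul u v = mul v u;
  mul_assoc : forall u v w, mul u (mul v w) = mul (mul u v) w;
  br_multilinear : forall (x : 'I_n -> V) (i : 'I_n) (a : F) u v,
    br (upd x i (a *: u + v)) = a *: br (upd x i u) + br (upd x i v);
  br_skew : forall (s : 'S_n) (x : 'I_n -> V),
    br (fun k => x (s k)) = (-1) ^+ s *: br x;
  br_fundamental : forall x y : 'I_n -> V,
    br (upd_last x (br y)) = \sum_(i < n) br (upd y i (br (upd_last x (y i))));
  br_leibniz : forall (x : 'I_n -> V) y z,
    br (upd_first x (mul y z)) =
      mul y (br (upd_first x z)) + mul z (br (upd_first x y))
}.

Definition derivation (d : V -> V) : Prop :=
  [/\ forall (a : F) u v, d (a *: u + v) = a *: d u + d v,
      forall u v, d (mul u v) = mul (d u) v + mul u (d v)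
    & forall x : 'I_n -> V, d (br x) = \sum_(i < n) br (upd x i (d (x i)))].

(* Subspaces of V are represented by predicates; the span of a set S *)
Definition span_of (S : V -> Prop) : V -> Prop :=
  fun v => exists s : seq V, (forall u, u \in s -> S u) /\ v \in <<s>>%VS.

Definition full : V -> Prop := fun _ => True.

Definition brS (A B : V -> Prop) : V -> Prop :=
  span_of (fun v => exists z : 'I_n -> V,
    [/\ forall k : 'I_n, val k = 0%N -> A (z k),
        forall k : 'I_n, val k = 1%N -> B (z k)
      & v = br z]).

Definition mulS (A B : V -> Prop) : V -> Prop :=
  span_of (fun v => exists a b, [/\ A a, B b & v = mul a b]).

Definition addS (A B : V -> Prop) : V -> Prop :=
  span_of (fun v => A v \/ B v).

Definition subsp (A B : V -> Prop) : Prop := forall v, A v -> B v.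

Definition is_ideal (I : V -> Prop) : Prop :=
  [/\ I 0, (forall (a : F) u v, I u -> I v -> I (a *: u + v)),
      subsp (brS I full) I & subsp (mulS I full) I].

(* ideal_pow I k = I^(k+1):  I^1 = I,
   I^(k+1) = [I^k, I, P, ..., P] + I^k . I *)
Fixpoint ideal_pow (I : V -> Prop) (k : nat) : V -> Prop :=
  match k with
  | 0 => I
  | k'.+1 => addS (brS (ideal_pow I k') I) (mulS (ideal_pow I k') I)
  end.

Definition nilpotent_ideal (I : V -> Prop) : Prop :=
  is_ideal I /\ exists k, forall v, ideal_pow I k v -> v = 0.

Definition is_Nil (N : V -> Prop) : Prop :=
  nilpotent_ideal N /\ forall J, nilpotent_ideal J -> subsp J N.

(* derived_series k = P^(k+1): P^(1) = P,
   P^(k+1) = [P^(k), P^(k), P, ..., P] + P^(k) . P^(k) *)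
Fixpoint derived_series (k : nat) : V -> Prop :=
  match k with
  | 0 => full
  | k'.+1 => addS (brS (derived_series k') (derived_series k'))
                  (mulS (derived_series k') (derived_series k'))
  end.

Definition solvable_alg : Prop :=
  exists k, forall v, derived_series k v -> v = 0.

End PoissonNLie.

(* Main.v *)
Require Import Defs.
From HB Require Import structures.
From mathcomp Require Import all_boot all_order all_algebra all_fingroup.
From Stdlib Require Import FunctionalExtensionality.
From mathcomp Require Import zify.
Set Implicit Arguments. Unset Strict Implicit. Unset Printing Implicit Defensive.
Import GRing.Theory.
Local Open Scope ring_scope.


Section Gen.
Variables (F : fieldType) (V : vectType F).

Definition subspace (T : V -> Prop) :=
  T 0 /\ forall (a : F) u v, T u -> T v -> T (a *: u + v).

Lemma subspace_add T u v : subspace T -> T u -> T v -> T (u + v).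
Proof. by move=> [_ H] Tu Tv; have := H 1 u v Tu Tv; rewrite scale1r. Qed.

Lemma subspace_scale T a u : subspace T -> T u -> T (a *: u).
Proof. by move=> [T0 H] Tu; have := H a u 0 Tu T0; rewrite addr0. Qed.

Lemma subspace_opp T u : subspace T -> T u -> T (- u).
Proof. by move=> sT Tu; rewrite -scaleN1r; apply: subspace_scale. Qed.

Lemma subspace_sub T u v : subspace T -> T u -> T v -> T (u - v).
Proof. by move=> sT Tu Tv; apply: subspace_add => //; apply: subspace_opp. Qed.

Lemma subspace_sum T (I : Type) (s : seq I) (P : pred I) (f : I -> V) :
  subspace T -> (forall i, P i -> T (f i)) -> T (\sum_(i <- s | P i) f i).
Proof.
move=> sT Hf; elim/big_ind: _ => //; first by case: sT.
by move=> x y Tx Ty; apply: subspace_add.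
Qed.

Lemma span_sub (S T : V -> Prop) : subspace T -> (forall v, S v -> T v) ->
  forall v, span_of S v -> T v.
Proof.
move=> sT ST v [s [Ss vs]].
have vs' : v \in span (in_tuple s) by [].
rewrite (coord_span vs'); apply: subspace_sum => // i _.
apply: subspace_scale => //; apply: ST; apply: Ss.
by rewrite mem_nth // size_tuple.
Qed.

Lemma span_subspace S : subspace (span_of S).
Proof.
split; first by exists [::]; split => //; exact: mem0v.
move=> a u v [s [Ss us]] [s' [Ss' vs']]; exists (s ++ s'); split.
  by move=> w; rewrite mem_cat => /orP [] ?; [apply: Ss | apply: Ss'].
rewrite span_cat; apply: memvD; first by apply: memvZ; apply: (subvP (addvSl _ _)).
by apply: (subvP (addvSr _ _)).
Qed.

Lemma span_gen (S : V -> Prop) v : S v -> span_of S v.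
Proof. by move=> Sv; exists [:: v]; split; [move=> u; rewrite inE => /eqP -> | apply: memv_span; rewrite inE]. Qed.

Definition mlin (r : nat) (g : ('I_r -> V) -> V) :=
  forall (x : 'I_r -> V) i (a : F) u v,
    g (upd x i (a *: u + v)) = a *: g (upd x i u) + g (upd x i v).

Lemma upd_id r (x : 'I_r -> V) i : upd x i (x i) = x.
Proof. by apply: functional_extensionality => k; rewrite /upd; case: eqP => // ->. Qed.

Lemma upd_upd r (x : 'I_r -> V) i u v : upd (upd x i u) i v = upd x i v.
Proof. by apply: functional_extensionality => k; rewrite /upd; case: eqP. Qed.

Lemma upd_same r (x : 'I_r -> V) i u : upd x i u i = u.
Proof. by rewrite /upd eqxx. Qed.

Lemma upd_other r (x : 'I_r -> V) i j u : j != i -> upd x i u j = x j.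
Proof. by rewrite /upd => /negbTE ->. Qed.

Section Mlin.
Variables (r : nat) (g : ('I_r -> V) -> V) (hg : mlin g).

Lemma mlin_add x i u v : g (upd x i (u + v)) = g (upd x i u) + g (upd x i v).
Proof. by have := hg x i 1 u v; rewrite !scale1r. Qed.

Lemma mlin0 x i : g (upd x i 0) = 0.
Proof.
have := mlin_add x i 0 0; rewrite addr0 => /eqP.
by rewrite -subr_eq0 opprD addrA subrr add0r oppr_eq0 => /eqP.
Qed.

Lemma mlinZ x i a u : g (upd x i (a *: u)) = a *: g (upd x i u).
Proof. by rewrite -[a *: u]addr0 hg mlin0 addr0. Qed.

Lemma mlinN x i u : g (upd x i (- u)) = - g (upd x i u).
Proof. by rewrite -scaleN1r mlinZ scaleN1r. Qed.

Lemma mlinB x i u v : g (upd x i (u - v)) = g (upd x i u) - g (upd x i v).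
Proof. by rewrite mlin_add mlinN. Qed.

Lemma mlin_sum x i (I : Type) (s : seq I) (P : pred I) (f : I -> V) :
  g (upd x i (\sum_(j <- s | P j) f j)) = \sum_(j <- s | P j) g (upd x i (f j)).
Proof.
elim: s => [|a s IH]; first by rewrite !big_nil mlin0.
rewrite !big_cons; case: (P a) => //.
by rewrite mlin_add IH.
Qed.

Lemma mlin_zero_slot x i : x i = 0 -> g x = 0.
Proof. by move=> h; rewrite -(upd_id x i) h mlin0. Qed.

End Mlin.
End Gen.


Section Poisson.
Variables (F : fieldType) (V : vectType F) (n : nat).
Variables (mul : V -> V -> V) (br : ('I_n -> V) -> V).
Hypothesis Hp : poisson_nlie mul br.
Hypothesis hn : (1 < n)%N.

Definition i0 : 'I_n := Ordinal (ltn_trans (ltnSn 0) hn).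
Definition i1 : 'I_n := Ordinal hn.
Lemma il_lt : (n.-1 < n)%N. Proof. by rewrite ltn_predL; apply: ltn_trans hn. Qed.
Definition il : 'I_n := Ordinal il_lt.

Lemma i01 : i1 != i0. Proof. by []. Qed.
Lemma i0l : i0 != il.
Proof.
have : (0 < n.-1)%N by rewrite -subn1 subn_gt0.
by rewrite /i0 /il; move=> h; apply/eqP => /(congr1 val) /= h'; move: h; rewrite -h'.
Qed.

Lemma br_mlin : mlin br.
Proof. by move=> x i a u v; apply: (br_multilinear Hp). Qed.

Lemma upd_firstE (x : 'I_n -> V) w : upd_first x w = upd x i0 w.
Proof.
apply: functional_extensionality => k; rewrite /upd_first /upd.
by have -> : (k == i0) = (val k == 0%N) by [].
Qed.

Lemma upd_lastE (x : 'I_n -> V) w : upd_last x w = upd x il w.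
Proof.
apply: functional_extensionality => k; rewrite /upd_last /upd.
by have -> : (k == il) = (val k == n.-1) by [].
Qed.

Lemma br_swap (x : 'I_n -> V) (i j : 'I_n) : i != j ->
  br (fun k => x (tperm i j k)) = - br x.
Proof. by move=> ij; rewrite (br_skew Hp) odd_tperm ij expr1 scaleN1r. Qed.

Lemma br_swap' (x : 'I_n -> V) (i j : 'I_n) : i != j ->
  br x = - br (fun k => x (tperm i j k)).
Proof. by move=> ij; rewrite br_swap // opprK. Qed.

Lemma ideal_any_slot (I : V -> Prop) : subspace I ->
  (forall x, I (x i0) -> I (br x)) -> forall x j, I (x j) -> I (br x).
Proof.
move=> sI H x j Ixj; have [e | ne] := eqVneq j i0; first by rewrite e in Ixj; apply: H.
rewrite (@br_swap' x i0 j); last by rewrite eq_sym.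
apply: subspace_opp => //; apply: H.
by rewrite tpermL.
Qed.

Lemma mulC u v : mul u v = mul v u. Proof. exact: (mul_comm Hp). Qed.

Lemma mul_linr (a : F) u v w : mul w (a *: u + v) = a *: mul w u + mul w v.
Proof. by rewrite mulC (mul_linl Hp) (mulC u) (mulC v). Qed.

Definition mul2 (x : 'I_2 -> V) : V := mul (x ord0) (x ord_max).

Lemma mul2_mlin : mlin mul2.
Proof.
move=> x i a u v; rewrite /mul2 /upd.
case: (ord0 =P i) => [<-|ne0]; first by rewrite (mul_linl Hp).
have -> : ord_max = i.
  apply/val_inj; move: ne0; case: i => [[|[|k]] Hk] //= ne0.
  by exfalso; apply: ne0; apply/val_inj.
by rewrite eqxx mul_linr.
Qed.

Section Ideal.
Variable N : V -> Prop.
Hypothesis HN : is_ideal mul br N.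

Lemma N_sub : subspace N.
Proof. by case: HN => N0 Nl _ _; split. Qed.

Lemma N_br0 x : N (x i0) -> N (br x).
Proof.
move=> Nx; case: HN => _ _ Hb _; apply: Hb; apply: span_gen; exists x; split => //.
by move=> k hk; have -> : k = i0 by apply/val_inj.
Qed.

Lemma N_br x j : N (x j) -> N (br x).
Proof. by apply: ideal_any_slot; [exact: N_sub | exact: N_br0]. Qed.

Lemma N_mul u v : N u -> N (mul u v).
Proof.
move=> Nu; case: HN => _ _ _ Hm; apply: Hm; apply: span_gen.
by exists u, v.
Qed.

Definition IP k := ideal_pow mul br N k.

Lemma gen_br k y : IP k (y i0) -> N (y i1) -> IP k.+1 (br y).
Proof.
move=> h1 h2; apply: span_gen; left; apply: span_gen; exists y; split => //.
  by move=> j hj; have -> : j = i0 by apply/val_inj.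
by move=> j hj; have -> : j = i1 by apply/val_inj.
Qed.

Lemma gen_mul k u v : IP k u -> N v -> IP k.+1 (mul u v).
Proof. by move=> h1 h2; apply: span_gen; right; apply: span_gen; exists u, v. Qed.

Lemma IP_sub k : subspace (IP k).
Proof. by case: k => [|k]; [exact: N_sub | exact: span_subspace]. Qed.

Lemma IPS_elim k (T : V -> Prop) : subspace T ->
  (forall y, IP k (y i0) -> N (y i1) -> T (br y)) ->
  (forall a b, IP k a -> N b -> T (mul a b)) -> forall v, IP k.+1 v -> T v.
Proof.
move=> sT Hb Hm v; apply: span_sub => // w [].
  apply: span_sub => // _ [y [h0 h1 ->]]; apply: Hb.
    by apply: h0.
  by apply: h1.
by apply: span_sub => // _ [a [b [ha hb ->]]]; apply: Hm.
Qed.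

Lemma sub_br_slot (T : V -> Prop) x i : subspace T ->
  subspace (fun v => T (br (upd x i v))).
Proof.
move=> [T0 Tl]; split; first by rewrite mlin0 //; exact: br_mlin.
by move=> a u v hu hv; rewrite br_mlin; apply: Tl.
Qed.

Lemma mul0l q : mul 0 q = 0.
Proof. by have := mul_linl Hp (-1) 0 0 q; rewrite scaler0 addr0 scaleN1r addNr. Qed.

Lemma sub_mul_l (T : V -> Prop) q : subspace T ->
  subspace (fun v => T (mul v q)).
Proof.
move=> [T0 Tl]; split.
  by rewrite mul0l.
by move=> a u v hu hv; rewrite (mul_linl Hp); apply: Tl.
Qed.

Lemma IP_ideal k : (forall x, IP k (x i0) -> IP k (br x)) /\
                   (forall u v, IP k u -> IP k (mul u v)).
Proof.
elim: k => [|k [IHb IHm]]; first by split; [exact: N_br0 | exact: N_mul].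
have IHb' : forall x j, IP k (x j) -> IP k (br x).
  by apply: ideal_any_slot; [exact: IP_sub | exact: IHb].
split.
- move=> x hx; have -> : br x = br (upd x i0 (x i0)) by rewrite upd_id.
  move: (x i0) hx.
  apply: (IPS_elim (T := fun v => IP k.+1 (br (upd x i0 v)))).
  + by apply: sub_br_slot; exact: IP_sub.
  + move=> y y0 y1.
    set x' := fun k => x (tperm i0 il k).
    have -> : upd x i0 (br y) = fun k => upd_last x' (br y) (tperm i0 il k).
      apply: functional_extensionality => j; rewrite upd_lastE /x' /upd tpermK.
      by rewrite -(inj_eq (@perm_inj _ (tperm i0 il))) tpermL.
    rewrite br_swap ?i0l // (br_fundamental Hp).
    apply: subspace_opp; first exact: IP_sub.
    apply: subspace_sum; first exact: IP_sub.
    move=> i _; rewrite upd_lastE.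
    have [-> | ne0] := eqVneq i i0.
      apply: gen_br; first by rewrite upd_same; apply: (IHb' _ il); rewrite upd_same.
      by rewrite upd_other // i01.
    have [-> | ne1] := eqVneq i i1.
      apply: gen_br; first by rewrite upd_other // eq_sym i01.
      by rewrite upd_same; apply: (N_br (j:=il)); rewrite upd_same.
    by apply: gen_br; rewrite upd_other // eq_sym.
  + move=> a b ha hb.
    rewrite -upd_firstE (br_leibniz Hp) !upd_firstE.
    apply: subspace_add; first exact: IP_sub.
      by apply: gen_mul => //; apply: N_br0; rewrite upd_same.
    by rewrite mulC; apply: gen_mul => //; apply: IHb; rewrite upd_same.
- move=> u q; move: u.
  apply: (IPS_elim (T := fun v => IP k.+1 (mul v q))).
  + by apply: sub_mul_l; exact: IP_sub.
  + move=> y y0 y1.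
    have L := br_leibniz Hp y q (y i0).
    rewrite !upd_firstE upd_id in L.
    have -> : mul (br y) q = br (upd y i0 (mul q (y i0))) - mul (y i0) (br (upd y i0 q)).
      by rewrite L mulC addrK.
    apply: subspace_sub; first exact: IP_sub.
      apply: gen_br; first by rewrite upd_same mulC; apply: IHm.
      by rewrite upd_other // i01.
    by apply: gen_mul => //; apply: (N_br (j:=i1)); rewrite upd_other // i01.
  + move=> a b ha hb.
    rewrite -(mul_assoc Hp); apply: gen_mul => //; exact: N_mul.
Qed.


Definition lev (a : nat) : V -> Prop :=
  if a is a'.+1 then IP a' else (fun _ => True).

Lemma lev_sub a : subspace (lev a).
Proof. by case: a => [|a] //=; exact: IP_sub. Qed.

Lemma lev_br a x : lev a (x i0) -> lev a (br x).
Proof. by case: a => [|a] //=; apply: (IP_ideal a).1. Qed.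

Lemma lev_mul a u v : lev a u -> lev a (mul u v).
Proof. by case: a => [|a] //=; apply: (IP_ideal a).2. Qed.

Lemma lev_br_raise a x : lev a (x i0) -> lev 1 (x i1) -> lev a.+1 (br x).
Proof.
case: a => [|a] /= h1 h2; first by apply: (N_br (j:=i1)).
exact: gen_br.
Qed.

Lemma lev_mul_raise a u v : lev a u -> lev 1 v -> lev a.+1 (mul u v).
Proof.
case: a => [|a] /= h1 h2; first by rewrite mulC; apply: N_mul.
exact: gen_mul.
Qed.

Lemma lev_mono a v : lev a.+1 v -> lev a v.
Proof.
case: a => [|a] //=; apply: IPS_elim; first exact: IP_sub.
  by move=> y y0 _; apply: (IP_ideal a).1.
by move=> u w hu _; apply: (IP_ideal a).2.
Qed.

Lemma lev_le a b v : (a <= b)%N -> lev b v -> lev a v.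
Proof.
move=> /subnK <-; elim: (b - a)%N => [|k IH] //= h.
by apply: IH; apply: lev_mono.
Qed.

Lemma lev_mul2 a x : lev a (x ord0) -> lev a (mul2 x).
Proof. exact: lev_mul. Qed.

Lemma lev_mul2_raise a x : lev a (x ord0) -> lev 1 (x ord_max) -> lev a.+1 (mul2 x).
Proof. exact: lev_mul_raise. Qed.

End Ideal.
End Poisson.


Section PS.
Variables (F : fieldType) (V : vectType F) (d : V -> V).
Hypothesis dlin : forall (a : F) u v, d (a *: u + v) = a *: d u + d v.
Hypothesis char0 : forall k : nat, (k%:R == 0 :> F) = (k == 0)%N.
Variable Mp : nat.
Local Notation M := (Mp.+1).

Lemma d0 : d 0 = 0.
Proof.
have := dlin 1 0 0; rewrite !scale1r addr0 => /eqP.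
by rewrite -subr_eq0 opprD addrA subrr add0r oppr_eq0 => /eqP.
Qed.
Lemma dD u v : d (u + v) = d u + d v.
Proof. by have := dlin 1 u v; rewrite !scale1r. Qed.
Lemma dZ a u : d (a *: u) = a *: d u.
Proof. by have := dlin a u 0; rewrite !addr0 d0 addr0. Qed.
Lemma dN u : d (- u) = - d u.
Proof. by rewrite -scaleN1r dZ scaleN1r. Qed.
Lemma d_sum I (s : seq I) (P : pred I) (f : I -> V) :
  d (\sum_(i <- s | P i) f i) = \sum_(i <- s | P i) d (f i).
Proof. by elim/big_rec2: _ => [|i x y _ <-]; [exact: d0 | exact: dD]. Qed.

Definition D (a : nat) (v : V) : V := (a`!%:R)^-1 *: iter a d v.

Lemma iterd_lin a (c : F) u v : iter a d (c *: u + v) = c *: iter a d u + iter a d v.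
Proof. by elim: a => //= a ->; rewrite dlin. Qed.
Lemma iterd0 a : iter a d 0 = 0.
Proof. by elim: a => //= a ->; rewrite d0. Qed.

Lemma D_lin a (c : F) u v : D a (c *: u + v) = c *: D a u + D a v.
Proof. by rewrite /D iterd_lin scalerDr !scalerA mulrC. Qed.
Lemma D0 a : D a 0 = 0. Proof. by rewrite /D iterd0 scaler0. Qed.
Lemma DD a u v : D a (u + v) = D a u + D a v.
Proof. by have := D_lin a 1 u v; rewrite !scale1r. Qed.
Lemma DZ a c u : D a (c *: u) = c *: D a u.
Proof. by have := D_lin a c u 0; rewrite !addr0 D0 addr0. Qed.
Lemma DN a u : D a (- u) = - D a u.
Proof. by rewrite -scaleN1r DZ scaleN1r. Qed.
Lemma D_sum a I (s : seq I) (P : pred I) (f : I -> V) :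
  D a (\sum_(i <- s | P i) f i) = \sum_(i <- s | P i) D a (f i).
Proof. by elim/big_rec2: _ => [|i x y _ <-]; [exact: D0 | exact: DD]. Qed.
Lemma D_0 v : D 0 v = v. Proof. by rewrite /D /= invr1 scale1r. Qed.

Lemma fact_neq0 a : (a`!%:R : F) != 0.
Proof. by rewrite char0 -lt0n fact_gt0. Qed.

Lemma dD_step a v : d (D a v) = (a.+1)%:R *: D a.+1 v.
Proof.
rewrite /D dZ scalerA factS natrM invfM mulrA mulfV ?mul1r //.
by rewrite char0.
Qed.

Definition E (w : nat -> V) (k : nat) : V := \sum_(a < M | (a <= k)%N) D a (w (k - a)%N).

Section G.
Variables (r : nat) (g : ('I_r -> V) -> V).
Hypothesis glin : mlin g.
Hypothesis gder : forall x, d (g x) = \sum_i g (upd x i (d (x i))).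

Definition fsum (phi : {ffun 'I_r -> 'I_M}) : nat := (\sum_i (phi i : nat))%N.

Lemma fsum_ge (phi : {ffun 'I_r -> 'I_M}) (i : 'I_r) : (phi i <= fsum phi)%N.
Proof. by rewrite /fsum (bigD1 i) //= leq_addr. Qed.

Definition bump (h : {ffun 'I_r -> 'I_M}) (i : 'I_r) : {ffun 'I_r -> 'I_M} :=
  [ffun l => if l == i then inord (h i).+1 else h l].
Definition unbump (h : {ffun 'I_r -> 'I_M}) (i : 'I_r) : {ffun 'I_r -> 'I_M} :=
  [ffun l => if l == i then inord (h i).-1 else h l].

Lemma fsum_bump (h : {ffun 'I_r -> 'I_M}) (i : 'I_r) : ((h i).+1 < M)%N -> fsum (bump h i) = (fsum h).+1.
Proof.
move=> hM; rewrite /fsum (bigD1 i) //= [in RHS](bigD1 i) //= ffunE eqxx inordK //.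
rewrite addSn; congr (_.+1); congr (_ + _)%N; apply: eq_bigr => l /negbTE hl.
by rewrite ffunE hl.
Qed.

Lemma LD j : (j < M)%N -> forall x,
  D j (g x) = \sum_(h | fsum h == j) g (fun i => D (h i) (x i)).
Proof.
elim: j => [|j IH] hj x.
  rewrite D_0 (big_pred1 [ffun => ord0]).
    by congr g; apply: functional_extensionality => i; rewrite ffunE D_0.
  move=> h; rewrite /= /fsum sum_nat_eq0; apply/forallP/eqP => [H|->].
    by apply/ffunP => i; rewrite ffunE; apply/val_inj; have /eqP := H i.
  by move=> i; rewrite ffunE.
have hj' : (j < M)%N by apply: ltnW.
apply: (@scalerI _ _ (j.+1%:R : F)); first by rewrite char0.
rewrite -dD_step IH // d_sum.
rewrite (eq_bigr (fun h : {ffun 'I_r -> 'I_M} => \sum_i ((h i).+1%:R : F) *: g (fun l => D (bump h i l) (x l)))); last first.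
  move=> h /eqP hs; rewrite gder; apply: eq_bigr => i _.
  have hi : ((h i).+1 < M)%N by apply: leq_ltn_trans hj; rewrite ltnS -hs fsum_ge.
  rewrite dD_step (mlinZ glin); congr (_ *: g _); apply: functional_extensionality => l.
  rewrite /upd ffunE; case: eqP => [->|] //.
  by rewrite inordK.
rewrite exchange_big /=.
rewrite scaler_sumr (eq_bigr (fun h : {ffun 'I_r -> 'I_M} => \sum_i ((h i : nat)%:R : F) *: g (fun l => D (h l) (x l)))); last first.
  by move=> h /eqP hs; rewrite -scaler_suml -natr_sum -/(fsum h) hs.
rewrite [in RHS]exchange_big /=; apply: eq_bigr => i _.
rewrite [in RHS](bigID (fun h : {ffun 'I_r -> 'I_M} => (0 < h i)%N)) /=.
rewrite [X in _ = _ + X]big1 ?addr0; last first.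
  by move=> h /andP [_]; rewrite -eqn0Ngt => /eqP ->; rewrite scale0r.
rewrite [in RHS](reindex_onto (fun h : {ffun 'I_r -> 'I_M} => bump h i) (fun h => unbump h i)) /=; last first.
  move=> h /andP [_ hi]; apply/ffunP => l; rewrite !ffunE.
  case: (l =P i) => [->|] //; rewrite ?ffunE eqxx; apply/val_inj.
  have hp : ((h i).-1 < M)%N by apply: leq_ltn_trans (ltn_ord (h i)); apply: leq_pred.
  by rewrite /= (inordK hp) prednK // inordK.
apply: eq_big => h.
  case: (ltnP (h i).+1 M) => hM.
    have hb : (bump h i i : nat) = (h i).+1 by rewrite ffunE eqxx inordK.
    have -> : unbump (bump h i) i = h.
      apply/ffunP => l; rewrite !ffunE; case: (l =P i) => [->|/eqP/negbTE ne].
        by rewrite ?ffunE eqxx (inordK hM) /=; apply/val_inj; rewrite /= inordK.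
      by [].
    by rewrite fsum_bump // eqSS hb eqxx andbT andbT.
  have hMp : (h i : nat) = Mp by apply/eqP; rewrite eqn_leq -ltnS ltn_ord.
  have -> : (fsum h == j) = false.
    apply/negbTE; rewrite neq_ltn; apply/orP; right.
    by apply: leq_trans (fsum_ge h i); rewrite hMp -ltnS.
  apply/esym/negbTE; rewrite negb_and; apply/orP; right.
  apply/negP => /eqP /ffunP /(_ i); rewrite !ffunE eqxx.
  have -> : (inord (h i).+1 : 'I_M) = ord0 by apply/val_inj; rewrite /= /inord val_insubd ltnNge hM.
  move=> /(congr1 val) /=; rewrite inordK // hMp => h0.
  by move: hj; rewrite -h0.
move=> /eqP hs.
have hi : ((h i).+1 < M)%N by apply: leq_ltn_trans hj; rewrite ltnS -hs fsum_ge.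
by rewrite ffunE eqxx inordK.
Qed.

Definition fset_at (T : finType) (phi : {ffun 'I_r -> T}) (J : 'I_r) (t : T) : {ffun 'I_r -> T} :=
  [ffun i => if i == J then t else phi i].

Lemma expand_aux (T : finType) (t0 : T) (G : 'I_r -> T -> V) j : (j <= r)%N ->
  forall x, g (fun i => if (i < j)%N then \sum_t G i t else x i) =
  \sum_(phi : {ffun 'I_r -> T} | [forall i : 'I_r, (j <= i)%N ==> (phi i == t0)])
     g (fun i => if (i < j)%N then G i (phi i) else x i).
Proof.
elim: j => [|j IH] hj x.
  rewrite (big_pred1 [ffun => t0]).
    by congr g; apply: functional_extensionality => i.
  move=> phi /=; apply/forallP/eqP => [H|->].
    by apply/ffunP => i; rewrite ffunE; apply/eqP; have := H i.
  by move=> i; rewrite ffunE eqxx ?implybT.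
set J : 'I_r := Ordinal hj.
have hj' : (j <= r)%N by apply: ltnW.
set y := fun i : 'I_r => if (i < j)%N then \sum_t G i t else x i.
have -> : (fun i : 'I_r => if (i < j.+1)%N then \sum_t G i t else x i) =
          upd y J (\sum_t G J t).
  apply: functional_extensionality => i; rewrite /upd /y ltnS leq_eqVlt.
  case: (i =P J) => [->|ne]; first by rewrite eqxx.
  by have -> : (i == j :> nat) = false by apply/negP => /eqP e; apply: ne; apply/val_inj.
rewrite (mlin_sum glin).
rewrite (partition_big (fun psi : {ffun 'I_r -> T} => psi J) predT) //.
apply: eq_bigr => t _.
have -> : upd y J (G J t) = (fun i => if (i < j)%N then \sum_t G i t else upd x J (G J t) i).
  apply: functional_extensionality => i; rewrite /upd /y.
  case: (i =P J) => [->|ne] //=; by rewrite ltnn.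
rewrite IH //.
rewrite [in RHS](reindex_onto (fun phi => fset_at phi J t) (fun psi => fset_at psi J t0)) /=; last first.
  move=> psi /andP [_ /eqP <-]; apply/ffunP => i; rewrite !ffunE.
  by case: (i =P J) => [->|].
apply: eq_big => phi.
  have -> : fset_at phi J t J == t by rewrite ffunE eqxx.
  rewrite andbT.
  apply/forallP/andP => [H|[/forallP H1 /eqP H2]].
    split.
      apply/forallP => i; apply/implyP => hi; rewrite ffunE.
      have -> : (i == J) = false.
        by apply/negP => /eqP e; move: hi; rewrite e /= ltnn.
      by apply: (implyP (H i)); apply: ltnW.
    apply/eqP/ffunP => i; rewrite !ffunE; case: (i =P J) => [->|] //.
    by apply/esym/eqP; apply: (implyP (H J)) => /=.
  move=> i; apply/implyP; rewrite leq_eqVlt => /orP [/eqP e|hi].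
    have eJ : i = J by apply/val_inj.
    by move/ffunP: H2 => /(_ i); rewrite !ffunE eJ eqxx => <-.
  have := implyP (H1 i) hi; rewrite ffunE.
  by have -> : (i == J) = false by apply/negP => /eqP e; move: hi; rewrite e /= ltnn.
move=> _; congr g; apply: functional_extensionality => i; rewrite ffunE /upd.
case: (ltngtP i j) => h.
- have -> : (i == J) = false by apply/negP => /eqP e; move: h; rewrite e /= ltnn.
  by rewrite ltnS ltnW.
- have -> : (i == J) = false by apply/negP => /eqP e; move: h; rewrite e /= ltnn.
  by rewrite ltnS leqNgt h.
- have e : i = J by apply/val_inj.
  by rewrite e eqxx /= ?ltnn ?ltnS ?leqnn /= -?e ?ltnSn.
Qed.

Lemma expand (T : finType) (t0 : T) (G : 'I_r -> T -> V) :
  g (fun i => \sum_t G i t) = \sum_(phi : {ffun 'I_r -> T}) g (fun i => G i (phi i)).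
Proof.
have := expand_aux t0 G (leqnn r) (fun _ => 0).
have -> : (fun i : 'I_r => if (i < r)%N then \sum_t G i t else 0) = (fun i => \sum_t G i t).
  by apply: functional_extensionality => i; rewrite ltn_ord.
move=> ->; apply: eq_big => phi.
  by apply/forallP => i; apply/implyP; rewrite leqNgt ltn_ord.
by move=> _; congr g; apply: functional_extensionality => i; rewrite ltn_ord.
Qed.

Definition conv (w : 'I_r -> nat -> V) (k : nat) : V :=
  \sum_(phi : {ffun 'I_r -> 'I_M} | fsum phi == k) g (fun i => w i (phi i)).

Definition addf (h phi : {ffun 'I_r -> 'I_M}) : {ffun 'I_r -> 'I_M} :=
  [ffun i => inord (h i + phi i)%N].
Definition subf (h psi : {ffun 'I_r -> 'I_M}) : {ffun 'I_r -> 'I_M} :=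
  [ffun i => inord (psi i - h i)%N].

Lemma fsum_addf (h phi : {ffun 'I_r -> 'I_M}) : (forall i, (h i + phi i < M)%N) ->
  fsum (addf h phi) = (fsum h + fsum phi)%N.
Proof.
move=> H; rewrite /fsum -big_split; apply: eq_bigr => i _.
by rewrite ffunE inordK.
Qed.

Lemma conv_E c k : (k < M)%N -> E (conv c) k = conv (fun i => E (c i)) k.
Proof.
move=> hk.
pose T (h phi : {ffun 'I_r -> 'I_M}) := g (fun i => D (h i) (c i (phi i))).
have Hl : E (conv c) k = \sum_h \sum_(phi | (fsum h + fsum phi == k)%N) T h phi.
  rewrite /E /conv.
  rewrite (eq_bigr (fun a : 'I_M => \sum_(phi | fsum phi == (k - a)%N) \sum_(h | fsum h == a) T h phi)); last first.
    move=> a _; rewrite D_sum; apply: eq_bigr => phi _; by rewrite LD.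
  rewrite (eq_bigr (fun a : 'I_M => \sum_(h | fsum h == a) \sum_(phi | fsum phi == (k - a)%N) T h phi)); last first.
    by move=> a _; rewrite exchange_big.
  rewrite (exchange_big_dep predT) //=; apply: eq_bigr => h _.
  case: (leqP (fsum h) k) => hh.
    rewrite (big_pred1 (inord (fsum h))); last first.
      move=> a /=; apply/andP/eqP => [[_ /eqP ->]|->]; first by rewrite inord_val.
      by rewrite inordK ?eqxx //; apply: leq_ltn_trans hk.
    rewrite inordK; last by apply: leq_ltn_trans hk.
    apply: eq_bigl => phi; apply/eqP/eqP => [->|<-]; first by rewrite subnKC.
    by rewrite addKn.
  rewrite big_pred0; last by move=> a; apply/andP => [[ha /eqP e]]; move: hh; rewrite e ltnNge ha.
  rewrite big_pred0 // => phi; apply/negP => /eqP e.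
  by move: hh; rewrite -e ltnNge leq_addr.
have Hr : conv (fun i => E (c i)) k = \sum_h \sum_(phi | (fsum h + fsum phi == k)%N) T h phi.
  rewrite /conv /E.
  rewrite (eq_bigr (fun psi : {ffun 'I_r -> 'I_M} =>
      \sum_(h : {ffun 'I_r -> 'I_M} | [forall i, (h i <= psi i)%N])
      g (fun i => D (h i) (c i (psi i - h i)%N)))); last first.
    move=> psi _.
    have -> : (fun i => \sum_(a < M | (a <= psi i)%N) D a (c i (psi i - a)%N)) =
              (fun i => \sum_(a < M) (if (a <= psi i)%N then D a (c i (psi i - a)%N) else 0)).
      by apply: functional_extensionality => i; rewrite big_mkcond.
    rewrite (expand ord0) [RHS]big_mkcond; apply: eq_bigr => h _.
    case: (boolP [forall i, (h i <= psi i)%N]) => [/forallP H|/forallPn [i hi]].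
      by congr g; apply: functional_extensionality => i; rewrite H.
    by apply: (mlin_zero_slot glin (i := i)); rewrite (negbTE hi).
  rewrite (exchange_big_dep predT) //=; apply: eq_bigr => h _.
  rewrite (reindex_onto (addf h) (subf h)) /=; last first.
    move=> psi /andP [_ /forallP H]; apply/ffunP => i; rewrite !ffunE.
    have e1 : (psi i - h i < M)%N by apply: leq_ltn_trans (ltn_ord (psi i)); apply: leq_subr.
    by rewrite (inordK e1) subnKC ?H // inord_val.
  have rng : forall phi : {ffun 'I_r -> 'I_M}, (fsum h + fsum phi == k)%N -> forall i, (h i + phi i < M)%N.
    move=> phi /eqP e i; apply: leq_ltn_trans hk; rewrite -e.
    by apply: leq_add; apply: fsum_ge.
  apply: eq_big => phi.
    apply/andP/idP => [[/andP [/eqP hs _] /eqP hsub]|hs].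
      have H : forall i, (h i + phi i < M)%N.
        move=> i; rewrite ltnNge; apply/negP => hge.
        move/ffunP: hsub => /(_ i); rewrite !ffunE.
        have -> : (inord (h i + phi i)%N : 'I_M) = ord0.
          by apply/val_inj; rewrite /= /inord val_insubd ltnNge hge.
        rewrite /= sub0n => /(congr1 val); rewrite /= inordK // => e.
        by move: hge; rewrite -e addn0 ltnNge -ltnS ltn_ord.
      by rewrite -fsum_addf // hs.
    have H := rng _ hs; split.
      rewrite fsum_addf // hs /=; apply/forallP => i; rewrite ffunE inordK //.
      exact: leq_addr.
    apply/eqP/ffunP => i; rewrite !ffunE.
    by rewrite (inordK (H i)) addKn inord_val.
  move=> /andP [_ /eqP hsub]; rewrite /T; congr g.
  apply: functional_extensionality => i; congr (D _ (c i _)).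
  move/ffunP: hsub => /(_ i); rewrite [X in X = _]ffunE => /(congr1 val).
  rewrite /= inordK //; apply: leq_ltn_trans (ltn_ord (addf h phi i)); exact: leq_subr.
by rewrite Hl Hr.
Qed.

End G.

Section Inv.
Variable w : nat -> V.
Fixpoint cpre (k : nat) : nat -> V :=
  match k with
  | 0 => fun j => w j
  | k'.+1 => fun j => if j == k'.+1 then
       w j - \sum_(a < M | (0 < a <= j)%N) D a (cpre k' (j - a)%N)
     else cpre k' j
  end.
Definition cinv (j : nat) : V := cpre j j.

Lemma cpre_stable k j : (j <= k)%N -> cpre k j = cinv j.
Proof.
elim: k => [|k IH] hj.
  by move: hj; rewrite leqn0; move=> /eqP ->.
have [e|ne] := eqVneq j k.+1; first by rewrite e.
rewrite /= (negbTE ne); apply: IH.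
by rewrite -ltnS ltn_neqAle ne hj.
Qed.

Lemma E_cinv k : E cinv k = w k.
Proof.
rewrite /E (bigD1 ord0) //= subn0 D_0.
case: k => [|k].
  rewrite big_pred0 ?addr0 // => a; rewrite leqn0; apply/andP => [[/eqP e ne]].
  by move: ne; rewrite -(inj_eq val_inj) /= e eqxx.
have -> : cinv k.+1 = w k.+1 - \sum_(a < M | (0 < a <= k.+1)%N) D a (cinv (k.+1 - a)%N).
  rewrite {1}/cinv /= eqxx; congr (_ - _); apply: eq_bigr => a /andP [ha _].
  by rewrite cpre_stable //; lia.
rewrite -[RHS](subrK (\sum_(a < M | (0 < a <= k.+1)%N) D a (cinv (k.+1 - a)%N))).
congr (_ + _); apply: eq_bigl => a.
by rewrite -(inj_eq val_inj) /= andbC lt0n.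
Qed.
End Inv.

Definition lc (x : F) (u v : nat -> V) : nat -> V := fun k => x *: u k + v k.

Lemma E_lc x u v k : E (lc x u v) k = x *: E u k + E v k.
Proof.
rewrite /E scaler_sumr -big_split; apply: eq_bigr => a _.
by rewrite /lc D_lin.
Qed.

Lemma E_zero k : E (fun _ => 0) k = 0.
Proof. by rewrite /E big1 // => a _; rewrite D0. Qed.

Definition updf r (w : 'I_r -> nat -> V) (i : 'I_r) (u : nat -> V) : 'I_r -> nat -> V :=
  fun l => if l == i then u else w l.

Lemma updf_comm r (w : 'I_r -> nat -> V) i j u v : i != j ->
  updf (updf w i u) j v = updf (updf w j v) i u.
Proof.
move=> ij; apply: functional_extensionality => l; rewrite /updf.
case: (l =P j) => [->|]; last by [].
by rewrite eq_sym (negbTE ij).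
Qed.

Section HM.
Variable lev : nat -> V -> Prop.
Hypothesis lev_sub : forall a, subspace (lev a).
Hypothesis lev0 : forall v, lev 0 v.

Definition Aset a (f : nat -> V) := exists c : nat -> V,
  (forall k, lev a (c k)) /\ forall k, (k < M)%N -> f k = E c k.
Definition Bset b (f : nat -> V) := forall k, (k < M)%N -> lev b (f k).
Definition Hset L (h : nat -> V) := exists fs : nat -> nat -> V,
  (forall k, (k < M)%N -> h k = \sum_(a < L.+1) fs a k) /\
  forall a, (a <= L)%N -> Aset a (fs a) /\ Bset (L - a) (fs a).

Lemma Aset_lc a x u v : Aset a u -> Aset a v -> Aset a (lc x u v).
Proof.
move=> [cu [hu eu]] [cv [hv ev]]; exists (lc x cu cv); split.
  by move=> k; apply: (lev_sub a).2.
by move=> k hk; rewrite E_lc /lc eu // ev.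
Qed.

Lemma Aset_0 a : Aset a (fun _ => 0).
Proof. by exists (fun _ => 0); split => [k|k _]; [exact: (lev_sub a).1 | rewrite E_zero]. Qed.

Lemma Bset_lc b x u v : Bset b u -> Bset b v -> Bset b (lc x u v).
Proof. by move=> hu hv k hk; apply: (lev_sub b).2; [apply: hu | apply: hv]. Qed.

Lemma Bset_0 b : Bset b (fun _ => 0).
Proof. by move=> k _; exact: (lev_sub b).1. Qed.

Lemma A0_all f : Aset 0 f.
Proof. by exists (cinv f); split => // k _; rewrite E_cinv. Qed.

Lemma Hset_lc L x u v : Hset L u -> Hset L v -> Hset L (lc x u v).
Proof.
move=> [fu [su hu]] [fv [sv hv]]; exists (fun a => lc x (fu a) (fv a)); split.
  by move=> k hk; rewrite /lc su // sv // scaler_sumr -big_split.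
move=> a ha; have [A1 B1] := hu a ha; have [A2 B2] := hv a ha.
by split; [apply: Aset_lc | apply: Bset_lc].
Qed.

Lemma Hset_0 L : Hset L (fun _ => 0).
Proof.
exists (fun _ _ => 0); split; first by move=> k _; rewrite big1.
by move=> a _; split; [exact: Aset_0 | exact: Bset_0].
Qed.

Definition Q s (v : V) := exists h, Hset s.+1 h /\
  (forall k, (k < s.+1)%N -> h k = 0) /\ h s.+1 = v.

Lemma Q_sub s : subspace (Q s).
Proof.
split; first by exists (fun _ => 0); split; [exact: Hset_0 | split].
move=> x u v [hu [Hu [zu vu]]] [hv [Hv [zv vv]]]; exists (lc x hu hv); split.
  exact: Hset_lc.
split; last by rewrite /lc vu vv.
by move=> k hk; rewrite /lc zu // zv // scaler0 addr0.
Qed.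

Section Slot.
Variables (r : nat) (g : ('I_r -> V) -> V).
Hypothesis glin : mlin g.
Hypothesis gder : forall x, d (g x) = \sum_i g (upd x i (d (x i))).
Variables (s0 s1 : 'I_r).
Hypothesis s10 : s1 != s0.
Hypothesis PI : forall a x, lev a (x s0) -> lev a (g x).
Hypothesis PR : forall a x, lev a (x s0) -> lev 1 (x s1) -> lev a.+1 (g x).

Lemma upd_fun (w : 'I_r -> nat -> V) i u (phi : {ffun 'I_r -> 'I_M}) :
  (fun l => updf w i u l (phi l)) = upd (fun l => w l (phi l)) i (u (phi i)).
Proof.
apply: functional_extensionality => l; rewrite /upd /updf.
by case: (l =P i) => [->|].
Qed.

Lemma conv_upd_lc w i x u v k :
  conv g (updf w i (lc x u v)) k = x *: conv g (updf w i u) k + conv g (updf w i v) k.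
Proof.
rewrite /conv scaler_sumr -big_split; apply: eq_bigr => phi _.
by rewrite !upd_fun glin.
Qed.

Lemma conv_upd_sum w i L (f : nat -> nat -> V) k :
  conv g (updf w i (fun k => \sum_(a < L) f a k)) k =
  \sum_(a < L) conv g (updf w i (f a)) k.
Proof.
rewrite /conv exchange_big /=; apply: eq_bigr => phi _.
by rewrite upd_fun (mlin_sum glin); apply: eq_bigr => a _; rewrite upd_fun.
Qed.

Lemma conv_local w w' k : (forall i k, (k < M)%N -> w i k = w' i k) ->
  conv g w k = conv g w' k.
Proof.
move=> H; apply: eq_bigr => phi _; congr g.
by apply: functional_extensionality => i; apply: H.
Qed.

Lemma conv_A_raise a w : Aset a (w s0) -> Aset 1 (w s1) -> Aset a.+1 (conv g w).
Proof.
move=> [c0 [l0 e0]] [c1 [l1 e1]].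
pose c i := if i == s0 then c0 else if i == s1 then c1 else cinv (w i).
exists (conv g c); split.
  move=> k; apply: subspace_sum; first exact: lev_sub.
  move=> phi _; apply: PR; rewrite /c ?eqxx ?(negbTE s10) //.
move=> k hk; rewrite conv_E //; apply: conv_local => i j hj.
rewrite /c; case: (i =P s0) => [->|_]; first by rewrite e0.
case: (i =P s1) => [->|_]; first by rewrite e1.
by rewrite E_cinv.
Qed.

Lemma conv_A_ideal a w : Aset a (w s0) -> Aset a (conv g w).
Proof.
move=> [c0 [l0 e0]].
pose c i := if i == s0 then c0 else cinv (w i).
exists (conv g c); split.
  move=> k; apply: subspace_sum; first exact: lev_sub.
  move=> phi _; apply: PI; rewrite /c ?eqxx //.
move=> k hk; rewrite conv_E //; apply: conv_local => i j hj.
rewrite /c; case: (i =P s0) => [->|_]; first by rewrite e0.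
by rewrite E_cinv.
Qed.

Lemma conv_B_raise b w : Bset b (w s0) -> Bset 1 (w s1) -> Bset b.+1 (conv g w).
Proof.
move=> h0 h1 k hk; apply: subspace_sum; first exact: lev_sub.
move=> phi /eqP hs; apply: PR.
  by apply: h0; apply: leq_ltn_trans hk; rewrite -hs fsum_ge.
by apply: h1; apply: leq_ltn_trans hk; rewrite -hs fsum_ge.
Qed.

Lemma conv_B_ideal b w : Bset b (w s0) -> Bset b (conv g w).
Proof.
move=> h0 k hk; apply: subspace_sum; first exact: lev_sub.
move=> phi /eqP hs; apply: PI.
by apply: h0; apply: leq_ltn_trans hk; rewrite -hs fsum_ge.
Qed.


Definition W q u u' := updf (updf q s0 u) s1 u'.

Lemma W_s0 q u u' : W q u u' s0 = u.
Proof. by rewrite /W /updf eq_sym (negbTE s10) eqxx. Qed.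
Lemma W_s1 q u u' : W q u u' s1 = u'.
Proof. by rewrite /W /updf eqxx. Qed.

Lemma H_step L q h h' : Hset L h -> Hset 1 h' -> Hset L.+1 (conv g (W q h h')).
Proof.
move=> [fs [hs hfs]] [fs' [hs' hfs']].
pose f0 := fs' 0%N; pose f1 := fs' 1%N.
have [A0 B0] := hfs' 0%N isT; have [A1 B1] := hfs' 1%N isT.
pose G (c : nat) (k : nat) :=
  (if (c <= L)%N then conv g (W q (fs c) f0) k else 0) +
  (if (0 < c)%N then conv g (W q (fs c.-1) f1) k else 0).
exists G; split.
  move=> k hk.
  rewrite (conv_local (w' := W q (fun k => \sum_(a < L.+1) fs a k) (lc 1 f0 f1))); last first.
    move=> i j hj; rewrite /W /updf; case: (i =P s1) => _; first by rewrite hs' // /lc scale1r big_ord_recr big_ord1.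
    by case: (i =P s0) => _ //; rewrite hs.
  have e : forall u u', W q u u' = updf (updf q s1 u') s0 u.
    by move=> u u'; rewrite /W updf_comm // eq_sym.
  rewrite e conv_upd_sum.
  rewrite (eq_bigr (fun a : 'I_L.+1 => conv g (W q (fs a) f0) k + conv g (W q (fs a) f1) k)); last first.
    by move=> a _; rewrite -e /W conv_upd_lc scale1r.
  rewrite big_split /G big_split /=.
  rewrite [X in _ = X + _]big_ord_recr /= ltnn addr0.
  rewrite [X in _ = _ + X]big_ord_recl /= add0r.
  congr (_ + _); apply: eq_bigr => a _.
    by rewrite /= -ltnS ltn_ord.
move=> c hc.
have sA : forall (P : bool) f a, (P -> Aset a f) -> Aset a (fun k => if P then f k else 0).
  by move=> P f a; case: P => H; [apply: H | exact: Aset_0].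
have sB : forall (P : bool) f a, (P -> Bset a f) -> Bset a (fun k => if P then f k else 0).
  by move=> P f a; case: P => H; [apply: H | exact: Bset_0].
have -> : G c = lc 1 (fun k => if (c <= L)%N then conv g (W q (fs c) f0) k else 0)
                     (fun k => if (0 < c)%N then conv g (W q (fs c.-1) f1) k else 0).
  by apply: functional_extensionality => k; rewrite /G /lc scale1r.
split.
  apply: Aset_lc.
    apply: sA => hcL; apply: conv_A_ideal; rewrite W_s0; exact: (hfs c hcL).1.
  apply: sA => hc0; rewrite -{1}(prednK hc0); apply: conv_A_raise.
    rewrite W_s0; apply: (hfs c.-1 _).1; lia.
  by rewrite W_s1.
apply: Bset_lc.
  apply: sB => hcL; rewrite subSn //; apply: conv_B_raise.
    rewrite W_s0; exact: (hfs c hcL).2.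
  by rewrite W_s1.
apply: sB => hc0; apply: conv_B_ideal; rewrite W_s0.
have -> : (L.+1 - c = L - c.-1)%N by lia.
apply: (hfs c.-1 _).2; lia.
Qed.


Lemma fsum_split (phi : {ffun 'I_r -> 'I_M}) :
  fsum phi = (phi s0 + phi s1 + \sum_(i | (i != s0) && (i != s1)) phi i)%N.
Proof.
rewrite /fsum (bigD1 s0) //= (bigD1 s1) /=; last by rewrite s10.
by rewrite addnA.
Qed.

Lemma SL a (w : 'I_r -> nat -> V) :
  (forall k, (k < a)%N -> w s0 k = 0) -> w s1 0%N = 0 ->
  (forall i, i != s0 -> i != s1 -> forall k, (0 < k)%N -> w i k = 0) ->
  (forall k, (k <= a)%N -> conv g w k = 0) /\
  ((a.+1 < M)%N -> conv g w a.+1 =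
     g (fun i => w i (if i == s0 then a else if i == s1 then 1%N else 0%N))).
Proof.
move=> z0 z1 zo.
have tz : forall phi : {ffun 'I_r -> 'I_M},
    [|| (phi s0 < a)%N, (phi s1 == 0 :> nat) | [exists i, [&& i != s0, i != s1 & (0 < phi i)%N]]] ->
    g (fun i => w i (phi i)) = 0.
  move=> phi /or3P [h|/eqP h|/existsP [i /and3P [h1 h2 h3]]].
  - by apply: (mlin_zero_slot glin (i := s0)); apply: z0.
  - by apply: (mlin_zero_slot glin (i := s1)); rewrite h.
  - by apply: (mlin_zero_slot glin (i := i)); apply: zo.
split.
  move=> k hk; apply: big1 => phi /eqP hs; apply: tz.
  case: (ltnP (phi s0) a) => //= h0; case: eqP => //= h1.
  exfalso; move: hs; rewrite fsum_split => hs.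
  have : (a.+1 <= k)%N.
    rewrite -hs; apply: leq_trans (leq_addr _ _); rewrite -addn1; apply: leq_add => //.
    by rewrite lt0n; apply/eqP.
  by rewrite ltnNge hk.
move=> hM.
pose ps := [ffun i => inord (if i == s0 then a else if i == s1 then 1%N else 0%N) : 'I_M].
have vps : forall i, (ps i : nat) = (if i == s0 then a else if i == s1 then 1%N else 0%N).
  move=> i; rewrite ffunE inordK //; case: ifP => _; first by apply: ltnW.
  by case: ifP => _ //; apply: leq_ltn_trans hM.
rewrite /conv (bigD1 ps) /=; last first.
  rewrite fsum_split !vps eqxx (negbTE s10) eqxx big1 ?addn0 ?addn1 // => i /andP [h1 h2].
  by rewrite vps (negbTE h1) (negbTE h2).
rewrite big1 ?addr0; last first.
  move=> phi /andP [/eqP hs ne]; apply: tz.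
  case: (ltnP (phi s0) a) => //= h0; case: eqP => //= h1.
  case: existsP => // hex; exfalso; apply: (negP ne).
  have H : forall i, i != s0 -> i != s1 -> (phi i : nat) = 0%N.
    move=> i h2 h3; apply/eqP; rewrite -leqn0 leqNgt; apply/negP => h4.
    by apply: hex; exists i; rewrite h2 h3 h4.
  move: hs; rewrite fsum_split big1; last first.
    by move=> i /andP [h2 h3]; apply: H.
  rewrite addn0 => hs.
  have e0 : (phi s0 : nat) = a by lia.
  have e1 : (phi s1 : nat) = 1%N by lia.
  apply/eqP/ffunP => i; apply: val_inj; rewrite /= vps.
  case: (i =P s0) => [->|n0] //; case: (i =P s1) => [->|n1] //.
  by apply: H; apply/eqP.
by congr g; apply: functional_extensionality => i; rewrite vps.
Qed.

Lemma Q_step s u v x : Q s u -> Q 0 v -> (s.+2 < M)%N -> x s0 = u -> x s1 = v ->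
  Q s.+1 (g x).
Proof.
move=> [h [Hh [zh vh]]] [h' [Hh' [zh' vh']]] hM xu xv.
pose q := fun (i : 'I_r) (k : nat) => if k == 0%N then x i else 0.
exists (conv g (W q h h')); split; first exact: H_step.
have H1 : forall k, (k < s.+1)%N -> W q h h' s0 k = 0.
  by move=> k hk; rewrite W_s0 zh.
have H2 : W q h h' s1 0%N = 0 by rewrite W_s1 zh'.
have H3 : forall i, i != s0 -> i != s1 -> forall k, (0 < k)%N -> W q h h' i k = 0.
  move=> i n0 n1 k hk; rewrite /W /updf (negbTE n0) (negbTE n1) /q.
  by case: k hk.
have [S1 S2] := SL H1 H2 H3.
split; first by move=> k hk; apply: S1; rewrite -ltnS.
rewrite S2 //; congr g; apply: functional_extensionality => i.
have [e0|n0] := eqVneq i s0; first by rewrite e0 W_s0 vh.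
have [e1|n1] := eqVneq i s1; first by rewrite e1 W_s1 vh'.
by rewrite /W /updf (negbTE n0) (negbTE n1) /q.
Qed.

End Slot.

Definition cst (b : V) : nat -> V := fun k => if k == 0%N then b else 0.

Lemma E_cst b k : (k < M)%N -> E (cst b) k = D k b.
Proof.
move=> hk; rewrite /E (bigD1 (Ordinal hk)) //= subnn /cst eqxx big1 ?addr0 //.
move=> a /andP [ha ne]; have -> : ((k - a)%N == 0%N) = false.
  apply/negbTE; rewrite subn_eq0 -ltnNge ltn_neqAle ha andbT.
  by apply: contra ne => /eqP e; apply/eqP/val_inj.
by rewrite D0.
Qed.

Lemma D_1 v : D 1 v = d v.
Proof. by rewrite /D /= invr1 scale1r. Qed.

Lemma Q_base a b : (1 < M)%N -> lev 1 a -> lev 1 b -> Q 0 (a + d b).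
Proof.
move=> hM la lb.
pose h := fun k => (if k == 1%N then a else 0) + (E (cst b) k - cst b k).
exists h; split.
  exists (fun al => if al == 0%N then (fun k => (if k == 1%N then a else 0) - cst b k) else E (cst b)).
  split.
    move=> k hk; rewrite big_ord_recr big_ord1 /=.
    by rewrite /h -addrA; congr (_ + _); rewrite addrC.
  move=> al; case: al => [|[|al]] // _; split.
  - exact: A0_all.
  - move=> k _; apply: subspace_sub; first exact: lev_sub.
      by case: (k == 1%N) => //; exact: (lev_sub 1).1.
    by rewrite /cst; case: (k == 0%N) => //; exact: (lev_sub 1).1.
  - exists (cst b); split => //; move=> k; rewrite /cst.
    by case: (k == 0%N) => //; exact: (lev_sub 1).1.
  - by move=> k _; apply: lev0.
split.
  move=> k; rewrite ltnS leqn0 => /eqP ->.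
  by rewrite /h /= E_cst // D_0 /cst /= subrr addr0.
by rewrite /h /= E_cst // D_1 /cst /= subr0.
Qed.

Lemma Q_vanish m v : (forall u, lev m.+1 u -> u = 0) ->
  (forall a b u, (a <= b)%N -> lev b u -> lev a u) ->
  ((m + m).+1 < M)%N -> Q (m + m) v -> v = 0.
Proof.
move=> lm lle hM [h [[fs [hs hfs]] [_ <-]]].
rewrite hs // big1 // => al _.
have hal : (al <= (m + m).+1)%N by rewrite -ltnS ltn_ord.
have [A B] := hfs al hal.
case: (ltnP m al) => hma.
  case: A => c [lc ec]; rewrite ec // /E big1 // => i _.
  have -> : c ((m + m).+1 - i)%N = 0.
    by apply: lm; apply: (lle _ al) => //.
  by rewrite D0.
apply: lm; apply: (lle _ ((m + m).+1 - al)%N); first by lia.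
by apply: B.
Qed.

End HM.
End PS.


Theorem corollary5p12 (F : fieldType) (V : vectType F) (n : nat)
  (mul : V -> V -> V) (br : ('I_n -> V) -> V) :
  [pchar F] =i pred0 ->
  (2 <= n)%N ->
  poisson_nlie mul br ->
  solvable_alg mul br ->
  forall N : V -> Prop, is_Nil mul br N ->
  forall d : V -> V, derivation mul br d ->
  forall v, N v -> N (d v).
Proof.
move=> hchar hn Hp _ N [[HN [m Hm]] Nmax] d [dlin dmul dbr] v Nv.
have char0 : forall k : nat, (k%:R == 0 :> F) = (k == 0)%N by apply/pcharf0P.
have sN := N_sub HN.
have d0 : d 0 = 0 by apply: d0.
pose R := fun w => exists a b, N a /\ N b /\ w = a + d b.
have sR : subspace R.
  split; first by exists 0, 0; split; [exact: sN.1 | split; [exact: sN.1 | rewrite d0 addr0]].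
  move=> c u w [a1 [b1 [ha1 [hb1 ->]]]] [a2 [b2 [ha2 [hb2 ->]]]].
  exists (c *: a1 + a2), (c *: b1 + b2); split; first exact: sN.2.
  split; first exact: sN.2.
  by rewrite dlin scalerDr addrACA.
have mulD : forall u w q, mul (u + w) q = mul u q + mul w q.
  by move=> u w q; have := mul_linl Hp 1 u w q; rewrite !scale1r.
have HR : is_ideal mul br R.
  split => //; [exact: sR.1 | exact: sR.2 | |].
    apply: span_sub => // _ [z [hz0 _ ->]].
    have := hz0 (i0 hn) erefl => -[a [b [ha [hb ez]]]].
    rewrite -(upd_id z (i0 hn)) ez (mlin_add (br_mlin Hp)).
    set y := upd z (i0 hn) b.
    have hy := dbr y.
    rewrite (bigD1 (i0 hn)) //= /y upd_same upd_upd in hy.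
    have -> : br (upd z (i0 hn) (d b)) =
       d (br y) - \sum_(i | i != i0 hn) br (upd y i (d (y i))).
      by rewrite hy addrK.
    exists (br (upd z (i0 hn) a) - \sum_(i | i != i0 hn) br (upd y i (d (y i)))), (br y).
    split.
      apply: subspace_sub => //; first by apply: (N_br Hp hn HN (j := i0 hn)); rewrite upd_same.
      apply: subspace_sum => // i ni.
      apply: (N_br Hp hn HN (j := i0 hn)); rewrite upd_other; last by rewrite eq_sym.
      by rewrite /y upd_same.
    split; first by apply: (N_br Hp hn HN (j := i0 hn)); rewrite /y upd_same.
    by rewrite addrA [_ - _ + _]addrAC.
  apply: span_sub => // _ [u [q [[a [b [ha [hb ->]]]] _ ->]]].
  rewrite mulD.
  have -> : mul (d b) q = d (mul b q) - mul b (d q) by rewrite dmul addrK.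
  exists (mul a q - mul b (d q)), (mul b q); split.
    by apply: subspace_sub => //; apply: (N_mul HN).
  split; first by apply: (N_mul HN).
  by rewrite addrA [_ - _ + _]addrAC.
pose lv := lev mul br N.
pose Mp := (m + m).+1.
have lsub : forall a, subspace (lv a) by move=> a; apply: lev_sub.
have l0 : forall w, lv 0 w by [].
have lle : forall a b w, (a <= b)%N -> lv b w -> lv a w.
  by move=> a b w; apply: lev_le.
have lm : forall u, lv m.+1 u -> u = 0 by [].
have base : forall w, R w -> Q d Mp lv 0 w.
  move=> w [a [b [ha [hb ->]]]]; apply: (Q_base dlin lsub l0 _ ha hb).
  by rewrite /Mp.
have gder2 : forall x, d (mul2 mul x) = \sum_i mul2 mul (upd x i (d (x i))).
  move=> x; rewrite big_ord_recr big_ord1 /= /mul2 dmul.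
  have -> : widen_ord (leqnSn 1) ord0 = ord0 :> 'I_2 by apply/val_inj.
  by rewrite !upd_same !upd_other.
have PIb : forall a x, lv a (x (i0 hn)) -> lv a (br x).
  by move=> a x; apply: lev_br.
have PRb : forall a x, lv a (x (i0 hn)) -> lv 1 (x (i1 hn)) -> lv a.+1 (br x).
  by move=> a x; apply: lev_br_raise.
have PIm : forall a (x : 'I_2 -> V), lv a (x ord0) -> lv a (mul2 mul x).
  by move=> a x; apply: lev_mul2.
have PRm : forall a (x : 'I_2 -> V), lv a (x ord0) -> lv 1 (x ord_max) -> lv a.+1 (mul2 mul x).
  by move=> a x; apply: lev_mul2_raise.
have key : forall s, (s <= m + m)%N -> forall w, ideal_pow mul br R s w -> Q d Mp lv s w.
  elim=> [|s IH] hs; first exact: base.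
  apply: (IPS_elim (hn := hn)); first exact: Q_sub.
    move=> y y0 y1.
    apply: (Q_step dlin char0 lsub (br_mlin Hp) dbr (i01 hn) PIb PRb (u := y (i0 hn)) (v := y (i1 hn))).
    - by apply: IH => //; apply: ltnW.
    - exact: base.
    - by rewrite /Mp; lia.
    - by [].
    - by [].
  move=> a b ha hb.
  have -> : mul a b = mul2 mul (fun i : 'I_2 => if i == ord0 then a else b) by [].
  apply: (Q_step dlin char0 lsub (mul2_mlin Hp) gder2 (s0 := ord0) (s1 := ord_max) isT PIm PRm (u := a) (v := b)).
  - by apply: IH => //; apply: ltnW.
  - exact: base.
  - by rewrite /Mp; lia.
  - by [].
  - by [].
have nR : nilpotent_ideal mul br R.
  split => //; exists (m + m) => w hw.
  apply: (Q_vanish dlin lm lle _ (key _ (leqnn _) _ hw)).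
  by rewrite /Mp.
apply: (Nmax R nR); exists 0, v; split; first exact: sN.1.
by split => //; rewrite add0r.
Qed.
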